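(* Consider the parametric weighted random graph mixture model with $Q\ge 2$ groups, and assume: (A1) the $Q(Q+1)/2$ values $\theta_{ql}$, $1\le q\le l\le Q$, are pairwise distinct; (A2) the family $\mathcal M=\{F(\cdot,\theta):\theta\in\Theta\}$ satisfies: (i) no $F(\cdot,\theta)$ has a point mass at $0$; (ii) finite mixtures from $\mathcal M$ are identifiable up to label swapping, i.e. for every integer $r\ge1$, if $\sum_{i=1}^r a_iF(\cdot,\theta_i)=\sum_{i=1}^r a_i'F(\cdot,\theta_i')$ (with nonnegative weights summing to 1) then $\sum_{i=1}^r a_i\delta_{\theta_i}=\sum_{i=1}^r a_i'\delta_{\theta_i'}$. Then the parameters $\boldsymbol\pi$, $\theta_{ql}$, $p_{ql}$, $1\le q\le l\le Q$, are identifiable, up to label swapping, from the joint distribution of $K_3$.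
   Context: Random graph mixture model: nodes have i.i.d. latent groups $Z_i\in\{1,\dots,Q\}$ with $\pi_q=\mathbb P(Z_i=q)\in(0,1)$, $\sum_q\pi_q=1$; edge variables $X_{ij}$ ($i<j$) are conditionally independent given all $Z$'s, with law of $X_{ij}$ depending only on $(Z_i,Z_j)$. Parametric weighted model: $X_{ij}$ takes values in $\mathcal X=\mathbb N$, $\mathbb R$ or $\mathbb R^s$, and given $Z_i=q,Z_j=l$ has law $\mu_{ql}=(1-p_{ql})\delta_0+p_{ql}F(\cdot,\theta_{ql})$, where $p_{ql}=p_{lq}\in(0,1]$, $\theta_{ql}=\theta_{lq}\in\Theta\subset\mathbb R^p$, $\delta_0$ is the Dirac mass at $0$, and $F(\cdot,\theta)$ is a probability measure with a density w.r.t. counting or Lebesgue measure. $K_n$ denotes the collection of the $\binom n2$ edge variables among $n$ nodes. ''Up to label swapping'' means up to a permutation $\sigma$ of $\{1,\dots,Q\}$ applied simultaneously to all group-indexed parameters. *)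

(* Defs.v *)
From Stdlib Require Import Reals Lra Lia Classical ClassicalEpsilon.
Open Scope R_scope.

Fixpoint sumR (n : nat) (f : nat -> R) : R :=
  match n with
  | O => 0
  | S k => sumR k f + f k
  end.

Definition ind {T : Type} (A : T -> Prop) (x : T) : R :=
  if excluded_middle_informative (A x) then 1 else 0.

Definition is_sigma_algebra {X : Type} (S : (X -> Prop) -> Prop) : Prop :=
  S (fun _ => True) /\
  (forall A, S A -> S (fun x => ~ A x)) /\
  (forall A : nat -> X -> Prop, (forall n, S (A n)) -> S (fun x => exists n, A n x)).

Definition is_prob_measure {X : Type} (S : (X -> Prop) -> Prop)
  (m : (X -> Prop) -> R) : Prop :=
  (forall A, S A -> 0 <= m A) /\
  m (fun _ => True) = 1 /\
  (forall A : nat -> X -> Prop,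
     (forall n, S (A n)) ->
     (forall n k x, n <> k -> A n x -> A k x -> False) ->
     infinite_sum (fun n => m (A n)) (m (fun x => exists n, A n x))).

Definition dirac {X : Type} (x0 : X) (A : X -> Prop) : R := ind A x0.

Definition mixF {X Theta : Type} (F : Theta -> (X -> Prop) -> R)
  (r : nat) (a : nat -> R) (th : nat -> Theta) (A : X -> Prop) : R :=
  sumR r (fun i => a i * F (th i) A).

Definition mixDirac {Theta : Type} (r : nat) (a : nat -> R) (th : nat -> Theta)
  (B : Theta -> Prop) : R :=
  sumR r (fun i => a i * dirac (th i) B).

Definition mixtures_identifiable {X Theta : Type} (S : (X -> Prop) -> Prop)
  (F : Theta -> (X -> Prop) -> R) : Prop :=
  forall (r : nat) (a a' : nat -> R) (th th' : nat -> Theta),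
    (1 <= r)%nat ->
    (forall i, (i < r)%nat -> 0 <= a i) -> sumR r a = 1 ->
    (forall i, (i < r)%nat -> 0 <= a' i) -> sumR r a' = 1 ->
    (forall A, S A -> mixF F r a th A = mixF F r a' th' A) ->
    forall B : Theta -> Prop, mixDirac r a th B = mixDirac r a' th' B.

Definition mu {X Theta : Type} (x0 : X) (F : Theta -> (X -> Prop) -> R)
  (p : nat -> nat -> R) (th : nat -> nat -> Theta) (q l : nat) (A : X -> Prop) : R :=
  (1 - p q l) * dirac x0 A + p q l * F (th q l) A.

(* Joint law of K_3 = (X_12, X_13, X_23), evaluated on the measurable rectangle
   A1 x A2 x A3 (rectangles form a pi-system generating the product sigma-algebra,
   so these values determine the joint distribution):
   sum_{q,l,m} pi_q pi_l pi_m mu_ql(A1) mu_qm(A2) mu_lm(A3)  (Z1=q, Z2=l, Z3=m). *)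
Definition K3_law {X Theta : Type} (x0 : X) (F : Theta -> (X -> Prop) -> R)
  (Q : nat) (pi : nat -> R) (p : nat -> nat -> R) (th : nat -> nat -> Theta)
  (A1 A2 A3 : X -> Prop) : R :=
  sumR Q (fun q => sumR Q (fun l => sumR Q (fun m =>
    pi q * pi l * pi m *
    (mu x0 F p th q l A1 * mu x0 F p th q m A2 * mu x0 F p th l m A3)))).

Definition valid_params {Theta : Type} (Q : nat)
  (pi : nat -> R) (p : nat -> nat -> R) (th : nat -> nat -> Theta) : Prop :=
  (forall q, (q < Q)%nat -> 0 < pi q < 1) /\
  sumR Q pi = 1 /\
  (forall q l, (q < Q)%nat -> (l < Q)%nat ->
     0 < p q l <= 1 /\ p q l = p l q /\ th q l = th l q).

Definition thetas_distinct {Theta : Type} (Q : nat) (th : nat -> nat -> Theta) : Prop :=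
  forall q l q' l', (q <= l)%nat -> (l < Q)%nat -> (q' <= l')%nat -> (l' < Q)%nat ->
    th q l = th q' l' -> q = q' /\ l = l'.

Definition is_perm (Q : nat) (sigma : nat -> nat) : Prop :=
  (forall q, (q < Q)%nat -> (sigma q < Q)%nat) /\
  (forall q q', (q < Q)%nat -> (q' < Q)%nat -> sigma q = sigma q' -> q = q').

(* Main.v *)
Require Import Defs.
From Stdlib Require Import Reals Lra Lia Arith Classical ClassicalEpsilon FunctionalExtensionality PropExtensionality.
Open Scope R_scope.

Lemma sumR_ext n f g : (forall i, (i < n)%nat -> f i = g i) -> sumR n f = sumR n g.
Proof. induction n; simpl; intros H; [reflexivity|]. rewrite IHn by (intros; apply H; lia). rewrite H by lia. reflexivity. Qed.

Lemma sumR_nonneg n f : (forall i, (i < n)%nat -> 0 <= f i) -> 0 <= sumR n f.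
Proof. induction n; simpl; intros H; [lra|]. assert (0 <= f n) by (apply H; lia). assert (0 <= sumR n f) by (apply IHn; intros; apply H; lia). lra. Qed.

Lemma sumR_add a b f : sumR (a + b) f = sumR a f + sumR b (fun j => f (a + j)%nat).
Proof. induction b; simpl. - rewrite Nat.add_0_r. lra. - rewrite Nat.add_succ_r. simpl. rewrite IHb. lra. Qed.

Lemma sumR_flat n m g : (0 < m)%nat ->
  sumR n (fun i => sumR m (fun j => g i j)) = sumR (n * m) (fun k => g (k / m)%nat (k mod m)%nat).
Proof.
  intros Hm. induction n; simpl; [reflexivity|].
  rewrite Nat.add_comm, sumR_add, IHn. f_equal. apply sumR_ext. intros j Hj.
  f_equal.
  - replace (n*m + j)%nat with (j + n * m)%nat by lia. rewrite Nat.div_add by lia. rewrite Nat.div_small by lia. lia.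
  - replace (n*m + j)%nat with (j + n * m)%nat by lia. rewrite Nat.Div0.mod_add. symmetry; apply Nat.mod_small; lia.
Qed.

Lemma sumR_zero_ex n f : sumR n f <> 0 -> exists i, (i < n)%nat /\ f i <> 0.
Proof. induction n; simpl; intros H; [lra|].
  destruct (Req_dec (f n) 0) as [E|E].
  - destruct IHn as [i [Hi Hf]]; [lra|]. exists i; split; [lia|auto].
  - exists n; split; [lia|auto]. Qed.

Lemma sumR_single n f a : (a < n)%nat -> (forall i, (i < n)%nat -> i <> a -> f i = 0) -> sumR n f = f a.
Proof. induction n; simpl; intros Ha H; [lia|].
  destruct (Nat.eq_dec a n) as [->|Ne].
  - rewrite (sumR_ext n f (fun _ => 0)). 2:{ intros; apply H; lia. }
    clear. assert (forall k, sumR k (fun _ => 0) = 0) as Z by (induction k; simpl; lra). rewrite Z; lra.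
  - rewrite IHn by (try lia; intros; apply H; lia). rewrite (H n) by lia. lra. Qed.

Lemma sumR_scal n c f : sumR n (fun i => c * f i) = c * sumR n f.
Proof. induction n; simpl; [lra|]. rewrite IHn; lra. Qed.

Definition sum3 (Q : nat) (g : nat -> nat -> nat -> R) : R :=
  sumR Q (fun q => sumR Q (fun l => sumR Q (fun m => g q l m))).

Lemma sum3_ext Q g h : (forall q l m, (q < Q)%nat -> (l < Q)%nat -> (m < Q)%nat -> g q l m = h q l m) -> sum3 Q g = sum3 Q h.
Proof. intros H. unfold sum3. apply sumR_ext; intros. apply sumR_ext; intros. apply sumR_ext; intros. auto. Qed.

Lemma sum3_zero_ex Q g : sum3 Q g <> 0 -> exists q l m, (q < Q)%nat /\ (l < Q)%nat /\ (m < Q)%nat /\ g q l m <> 0.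
Proof. unfold sum3; intros H.
  destruct (sumR_zero_ex _ _ H) as [q [Hq H1]].
  destruct (sumR_zero_ex _ _ H1) as [l [Hl H2]].
  destruct (sumR_zero_ex _ _ H2) as [m [Hm H3]]. exists q, l, m; auto. Qed.

Lemma sumR_0 n : sumR n (fun _ => 0) = 0.
Proof. induction n; simpl; lra. Qed.

Lemma sum3_single Q g a b c : (a < Q)%nat -> (b < Q)%nat -> (c < Q)%nat ->
  (forall q l m, (q < Q)%nat -> (l < Q)%nat -> (m < Q)%nat -> g q l m <> 0 -> q = a /\ l = b /\ m = c) ->
  sum3 Q g = g a b c.
Proof. intros Ha Hb Hc H. unfold sum3.
  assert (Z : forall q l m, (q < Q)%nat -> (l < Q)%nat -> (m < Q)%nat -> ~ (q = a /\ l = b /\ m = c) -> g q l m = 0).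
  { intros q l m Hq Hl Hm N. destruct (Req_dec (g q l m) 0); auto. exfalso; apply N; auto. }
  rewrite (sumR_single _ _ a); auto.
  - rewrite (sumR_single _ _ b); auto.
    + apply sumR_single; auto. intros m Hm Ne. apply Z; auto; lia.
    + intros l Hl Ne. rewrite (sumR_ext _ _ (fun _ => 0)); [apply sumR_0|]. intros m Hm; apply Z; auto; lia.
  - intros q Hq Ne. rewrite (sumR_ext _ _ (fun _ => 0)); [apply sumR_0|]. intros l Hl.
    rewrite (sumR_ext _ _ (fun _ => 0)); [apply sumR_0|]. intros m Hm; apply Z; auto; lia.
Qed.

Lemma sum3_flat Q g : (0 < Q)%nat -> sum3 Q g =
  sumR (Q * Q * Q) (fun k => g (k / Q / Q)%nat ((k / Q) mod Q)%nat (k mod Q)%nat).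
Proof. intros HQ. unfold sum3.
  rewrite (sumR_ext Q _ (fun q => sumR (Q*Q) (fun k => g q (k / Q)%nat (k mod Q)%nat))).
  2:{ intros q Hq. apply (sumR_flat Q Q (fun l m => g q l m)); auto. }
  rewrite (sumR_flat Q (Q*Q) (fun q k => g q (k / Q)%nat (k mod Q)%nat)) by lia.
  rewrite Nat.mul_assoc. apply sumR_ext. intros k Hk. f_equal.
  - rewrite Nat.Div0.div_div. reflexivity.
  - rewrite Nat.Div0.mod_mul_r. rewrite Nat.mul_comm, Nat.div_add by lia.
    rewrite Nat.div_small by (apply Nat.mod_upper_bound; lia). rewrite Nat.add_0_l. reflexivity.
  - rewrite Nat.Div0.mod_mul_r. rewrite Nat.mul_comm, Nat.Div0.mod_add. rewrite Nat.mod_small by (apply Nat.mod_upper_bound; lia). reflexivity.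
Qed.

Lemma pred_ext {X : Type} (P P' : X -> Prop) : (forall x, P x <-> P' x) -> P = P'.
Proof. intros H. apply functional_extensionality; intros x. apply propositional_extensionality; auto. Qed.

Section Meas.
Context {X : Type} (Sig : (X -> Prop) -> Prop) (HS : is_sigma_algebra Sig).

Lemma S_empty : Sig (fun _ => False).
Proof. destruct HS as [T [C _]]. specialize (C _ T).
  replace (fun _ : X => False) with (fun x : X => ~ True); auto. apply pred_ext; intros x; tauto. Qed.

Lemma S_union A B : Sig A -> Sig B -> Sig (fun x => A x \/ B x).
Proof. intros HA HB. destruct HS as [_ [_ U]].
  specialize (U (fun n => match n with O => A | _ => B end)).
  replace (fun x => A x \/ B x) with (fun x => exists n, (match n with O => A | _ => B end) x).
  - apply U. intros [|n]; auto.
  - apply pred_ext. intros x; split. + intros [[|n] H]; auto. + intros [H|H]; [exists O|exists 1%nat]; auto. Qed.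

Lemma S_compl A : Sig A -> Sig (fun x => ~ A x).
Proof. destruct HS as [_ [C _]]. auto. Qed.

Lemma S_inter A B : Sig A -> Sig B -> Sig (fun x => A x /\ B x).
Proof. intros HA HB. pose proof (S_compl _ (S_union _ _ (S_compl _ HA) (S_compl _ HB))) as H.
  replace (fun x => A x /\ B x) with (fun x => ~ (~ A x \/ ~ B x)); auto. apply pred_ext; intros x; tauto. Qed.

Variable m : (X -> Prop) -> R.
Hypothesis Hm : is_prob_measure Sig m.

Lemma sum_f_const c n : sum_f_R0 (fun _ => c) n = INR (S n) * c.
Proof. induction n; simpl. - lra. - rewrite IHn. rewrite S_INR. destruct n; simpl; lra. Qed.

Lemma m_empty : m (fun _ => False) = 0.
Proof. destruct Hm as [_ [_ U]].
  specialize (U (fun _ => fun _ => False)). cbv beta in U.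
  replace (fun x : X => exists n : nat, False) with (fun _ : X => False) in U by (apply pred_ext; intros x; split; [tauto | intros [_ H]; auto]).
  assert (Hs : infinite_sum (fun _ => m (fun _ => False)) (m (fun _ => False))).
  { apply U. intros; apply S_empty. intros; auto. }
  set (c := m (fun _ => False)) in *.
  destruct (Req_dec c 0) as [E|E]; auto. exfalso.
  destruct (Hs (Rabs c)) as [N HN]. apply Rabs_pos_lt; auto.
  specialize (HN (S N) ltac:(lia)). unfold R_dist in HN. rewrite sum_f_const in HN.
  replace (INR (S (S N)) * c - c) with (INR (S N) * c) in HN by (rewrite (S_INR (S N)); lra).
  rewrite Rabs_mult, Rabs_right in HN by (apply Rle_ge, pos_INR).
  assert (1 <= INR (S N)) by (rewrite S_INR; pose proof (pos_INR N); lra).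
  pose proof (Rabs_pos c). nra. Qed.

Lemma m_add A B : Sig A -> Sig B -> (forall x, A x -> B x -> False) ->
  m (fun x => A x \/ B x) = m A + m B.
Proof. intros HA HB D. destruct Hm as [_ [_ U]].
  specialize (U (fun n => match n with O => A | 1%nat => B | _ => fun _ => False end)). cbv beta in U.
  replace (fun x => exists n, (match n with O => A | 1%nat => B | _ => fun _ => False end) x) with (fun x => A x \/ B x) in U.
  2:{ apply pred_ext; intros x; split; cycle 1. + intros [[|[|n]] H]; auto; contradiction. + intros [H|H]; [exists O|exists 1%nat]; auto. }
  assert (Hs : infinite_sum (fun n => m (match n with O => A | 1%nat => B | _ => fun _ => False end)) (m (fun x => A x \/ B x))).
  { apply U. - intros [|[|n]]; auto. apply S_empty.
    - intros [|[|n]] [|[|k]] x Ne H1 H2; try contradiction; try lia; eauto. }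
  apply (uniqueness_sum _ _ _ Hs). intros eps He. exists 1%nat. intros n Hn.
  assert (sum_f_R0 (fun n => m (match n with O => A | 1%nat => B | _ => fun _ => False end)) n = m A + m B).
  { induction n; [lia|]. destruct n. - simpl. lra. - simpl sum_f_R0 in *. rewrite IHn by lia. rewrite m_empty. lra. }
  unfold R_dist. rewrite H. rewrite Rminus_diag, Rabs_R0. auto. Qed.

Lemma m_nonneg A : Sig A -> 0 <= m A.
Proof. destruct Hm as [P _]. auto. Qed.

Lemma m_true : m (fun _ => True) = 1.
Proof. destruct Hm as [_ [T _]]. auto. Qed.

Lemma m_restrict A x0 : Sig A -> Sig (fun x => x = x0) -> m (fun x => x = x0) = 0 ->
  m (fun x => A x /\ x <> x0) = m A.
Proof. intros HA H0 Z.
  assert (E1 : m A = m (fun x => A x /\ x <> x0) + m (fun x => A x /\ x = x0)).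
  { rewrite <- m_add.
    - f_equal. apply pred_ext. intros x. destruct (classic (x = x0)); tauto.
    - apply S_inter; auto. apply S_compl; auto.
    - apply S_inter; auto.
    - intros x [_ a] [_ b]; auto. }
  assert (E2 : m (fun x => x = x0) = m (fun x => A x /\ x = x0) + m (fun x => ~ A x /\ x = x0)).
  { rewrite <- m_add.
    - f_equal. apply pred_ext. intros x. destruct (classic (A x)); tauto.
    - apply S_inter; auto.
    - apply S_inter; auto. apply S_compl; auto.
    - intros x [a _] [b _]; auto. }
  pose proof (m_nonneg (fun x => A x /\ x = x0) ltac:(apply S_inter; auto)).
  pose proof (m_nonneg (fun x => ~ A x /\ x = x0) ltac:(apply S_inter; auto; apply S_compl; auto)).
  lra. Qed.
End Meas.

Section Mix.
Variables (X Theta : Type) (Sig : (X -> Prop) -> Prop) (HS : is_sigma_algebra Sig)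
  (F : Theta -> (X -> Prop) -> R) (HF : forall t, is_prob_measure Sig (F t))
  (HA : mixtures_identifiable Sig F).

Lemma Sig_true : Sig (fun _ => True).
Proof. destruct HS as [T _]; auto. Qed.

Lemma mix_lemma (r : nat) (w w' : nat -> R) (tau tau' : nat -> Theta) (t0 : Theta) :
  (forall i, (i < r)%nat -> 0 <= w i) -> (forall i, (i < r)%nat -> 0 <= w' i) ->
  (forall A, Sig A -> sumR r (fun i => w i * F (tau i) A) = sumR r (fun i => w' i * F (tau' i) A)) ->
  forall B : Theta -> Prop, sumR r (fun i => w i * Defs.ind B (tau i)) = sumR r (fun i => w' i * Defs.ind B (tau' i)).
Proof.
  intros Hw Hw' Heq B.
  assert (ET : sumR r w = sumR r w').
  { specialize (Heq _ Sig_true).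
    rewrite (sumR_ext r _ w) in Heq by (intros j Hj; rewrite (m_true Sig (F (tau j)) (HF _)); lra).
    rewrite (sumR_ext r (fun i => w' i * F (tau' i) (fun _ => True)) w') in Heq by (intros j Hj; rewrite (m_true Sig (F (tau' j)) (HF _)); lra). auto. }
  set (T := sumR r w) in *.
  assert (T0 : 0 <= T) by (apply sumR_nonneg; auto).
  set (a := fun i => if lt_dec i r then w i / (T+1) else 1/(T+1)).
  set (a' := fun i => if lt_dec i r then w' i / (T+1) else 1/(T+1)).
  set (th := fun i => if lt_dec i r then tau i else t0).
  set (th' := fun i => if lt_dec i r then tau' i else t0).
  assert (Split : forall (ww : nat -> R) (tt : nat -> Theta) (g : Theta -> R),
    sumR (S r) (fun i => (if lt_dec i r then ww i / (T+1) else 1/(T+1)) * g (if lt_dec i r then tt i else t0))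
    = / (T+1) * (sumR r (fun i => ww i * g (tt i)) + g t0)).
  { intros ww tt g. simpl. destruct (lt_dec r r) as [Hc|_]; [lia|].
    rewrite (sumR_ext r _ (fun i => /(T+1) * (ww i * g (tt i)))).
    - rewrite sumR_scal. unfold Rdiv. ring.
    - intros i Hi. destruct (lt_dec i r); [|lia]. unfold Rdiv. ring. }
  assert (Hmain := HA (S r) a a' th th' ltac:(lia)).
  assert (Ha : forall i, (i < S r)%nat -> 0 <= a i).
  { intros i _. unfold a. destruct (lt_dec i r). - apply Rmult_le_pos; auto. left; apply Rinv_0_lt_compat; lra.
    - unfold Rdiv; rewrite Rmult_1_l; left; apply Rinv_0_lt_compat; lra. }
  assert (Ha' : forall i, (i < S r)%nat -> 0 <= a' i).
  { intros i _. unfold a'. destruct (lt_dec i r). - apply Rmult_le_pos; auto. left; apply Rinv_0_lt_compat; lra.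
    - unfold Rdiv; rewrite Rmult_1_l; left; apply Rinv_0_lt_compat; lra. }
  assert (Hs : sumR (S r) a = 1).
  { pose proof (Split w (fun _ => t0) (fun _ => 1)) as E. cbv beta in E.
    rewrite (sumR_ext (S r) _ a) in E by (intros; rewrite Rmult_1_r; reflexivity).
    rewrite E. rewrite (sumR_ext r _ w) by (intros; ring). fold T. field. lra. }
  assert (Hs' : sumR (S r) a' = 1).
  { pose proof (Split w' (fun _ => t0) (fun _ => 1)) as E. cbv beta in E.
    rewrite (sumR_ext (S r) _ a') in E by (intros; rewrite Rmult_1_r; reflexivity).
    rewrite E. rewrite (sumR_ext r _ w') by (intros; ring). rewrite <- ET. fold T. field. lra. }
  assert (HM : forall A, Sig A -> mixF F (S r) a th A = mixF F (S r) a' th' A).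
  { intros A HA0. unfold mixF.
    pose proof (Split w tau (fun t => F t A)) as E1. pose proof (Split w' tau' (fun t => F t A)) as E2.
    cbv beta in E1, E2. unfold a, th, a', th'. rewrite E1, E2, Heq; auto. }
  specialize (Hmain Ha Hs Ha' Hs' HM B). unfold mixDirac in Hmain.
  pose proof (Split w tau (fun t => dirac t B)) as E1. pose proof (Split w' tau' (fun t => dirac t B)) as E2.
  cbv beta in E1, E2. unfold a, th, a', th' in Hmain. rewrite E1, E2 in Hmain.
  unfold dirac in Hmain.
  assert (0 < / (T+1)) by (apply Rinv_0_lt_compat; lra).
  apply Rmult_eq_reg_l in Hmain; [|lra]. lra.
Qed.
End Mix.

Lemma dec_bounds Q k : (0 < Q)%nat -> (k < Q * Q * Q)%nat ->
  (k / Q / Q < Q)%nat /\ ((k / Q) mod Q < Q)%nat /\ (k mod Q < Q)%nat.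
Proof. intros HQ Hk. split; [|split; apply Nat.mod_upper_bound; lia].
  rewrite Nat.Div0.div_div. apply Nat.Div0.div_lt_upper_bound. lia. Qed.

Lemma mix3 {X Theta : Type} (Sig : (X -> Prop) -> Prop) (HS : is_sigma_algebra Sig)
  (F : Theta -> (X -> Prop) -> R) (HF : forall t, is_prob_measure Sig (F t))
  (HA : mixtures_identifiable Sig F) (Q : nat) (HQ : (0 < Q)%nat)
  (g g' : nat -> nat -> nat -> R) (tau tau' : nat -> nat -> nat -> Theta) (t0 : Theta) :
  (forall q l m, (q < Q)%nat -> (l < Q)%nat -> (m < Q)%nat -> 0 <= g q l m) ->
  (forall q l m, (q < Q)%nat -> (l < Q)%nat -> (m < Q)%nat -> 0 <= g' q l m) ->
  (forall A, Sig A -> sum3 Q (fun q l m => g q l m * F (tau q l m) A) = sum3 Q (fun q l m => g' q l m * F (tau' q l m) A)) ->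
  forall B : Theta -> Prop, sum3 Q (fun q l m => g q l m * Defs.ind B (tau q l m)) = sum3 Q (fun q l m => g' q l m * Defs.ind B (tau' q l m)).
Proof.
  intros Hg Hg' H B. rewrite !sum3_flat by auto.
  apply (mix_lemma X Theta Sig HS F HF HA _ (fun k => g (k / Q / Q)%nat ((k / Q) mod Q)%nat (k mod Q)%nat)
    (fun k => g' (k / Q / Q)%nat ((k / Q) mod Q)%nat (k mod Q)%nat)
    (fun k => tau (k / Q / Q)%nat ((k / Q) mod Q)%nat (k mod Q)%nat)
    (fun k => tau' (k / Q / Q)%nat ((k / Q) mod Q)%nat (k mod Q)%nat) t0).
  - intros k Hk. destruct (dec_bounds Q k HQ Hk) as [? [? ?]]. auto.
  - intros k Hk. destruct (dec_bounds Q k HQ Hk) as [? [? ?]]. auto.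
  - intros A HA0. specialize (H A HA0). rewrite !sum3_flat in H by auto. exact H.
Qed.

Definition Psi (Q : nat) (pi : nat -> R) (f1 f2 f3 : nat -> nat -> R) : R :=
  sum3 Q (fun q l m => pi q * pi l * pi m * (f1 q l * f2 q m * f3 l m)).
Definition pF {X Theta : Type} (F : Theta -> (X -> Prop) -> R) (p : nat -> nat -> R) (th : nat -> nat -> Theta) (A : X -> Prop) :=
  fun q l => p q l * F (th q l) A.
Definition pI {Theta : Type} (p : nat -> nat -> R) (th : nat -> nat -> Theta) (B : Theta -> Prop) :=
  fun q l => p q l * Defs.ind B (th q l).

Definition nn (Q : nat) (f : nat -> nat -> R) := forall q l, (q < Q)%nat -> (l < Q)%nat -> 0 <= f q l.

Section Steps.
Variables (X Theta : Type) (Sig : (X -> Prop) -> Prop) (HS : is_sigma_algebra Sig)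
  (F : Theta -> (X -> Prop) -> R) (HF : forall t, is_prob_measure Sig (F t))
  (HA : mixtures_identifiable Sig F) (Q : nat) (HQ : (0 < Q)%nat) (t0 : Theta)
  (pi pi' : nat -> R) (p p' : nat -> nat -> R) (th th' : nat -> nat -> Theta)
  (Hpi : forall q, (q < Q)%nat -> 0 <= pi q) (Hpi' : forall q, (q < Q)%nat -> 0 <= pi' q)
  (Hp : nn Q p) (Hp' : nn Q p').

Lemma step1 f2 f2' f3 f3' : nn Q f2 -> nn Q f2' -> nn Q f3 -> nn Q f3' ->
  (forall A, Sig A -> Psi Q pi (pF F p th A) f2 f3 = Psi Q pi' (pF F p' th' A) f2' f3') ->
  forall B, Psi Q pi (pI p th B) f2 f3 = Psi Q pi' (pI p' th' B) f2' f3'.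
Proof.
  intros N2 N2' N3 N3' H B. unfold Psi, pI.
  pose proof (mix3 Sig HS F HF HA Q HQ
    (fun q l m => pi q * pi l * pi m * (p q l * f2 q m * f3 l m))
    (fun q l m => pi' q * pi' l * pi' m * (p' q l * f2' q m * f3' l m))
    (fun q l m => th q l) (fun q l m => th' q l) t0) as M.
  rewrite (sum3_ext Q _ (fun q l m => pi q * pi l * pi m * (p q l * f2 q m * f3 l m) * Defs.ind B (th q l))) by (intros; ring).
  rewrite (sum3_ext Q (fun q l m => pi' q * _ * _ * _) (fun q l m => pi' q * pi' l * pi' m * (p' q l * f2' q m * f3' l m) * Defs.ind B (th' q l))) by (intros; ring).
  apply M.
  - intros q l m Hq Hl Hm. pose proof (Hpi q Hq); pose proof (Hpi l Hl); pose proof (Hpi m Hm).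
    pose proof (Hp q l Hq Hl); pose proof (N2 q m Hq Hm); pose proof (N3 l m Hl Hm).
    repeat apply Rmult_le_pos; auto.
  - intros q l m Hq Hl Hm. pose proof (Hpi' q Hq); pose proof (Hpi' l Hl); pose proof (Hpi' m Hm).
    pose proof (Hp' q l Hq Hl); pose proof (N2' q m Hq Hm); pose proof (N3' l m Hl Hm).
    repeat apply Rmult_le_pos; auto.
  - intros A HA0. specialize (H A HA0). unfold Psi, pF in H.
    rewrite (sum3_ext Q _ (fun q l m => pi q * pi l * pi m * (p q l * F (th q l) A * f2 q m * f3 l m))) by (intros; ring).
    rewrite (sum3_ext Q (fun q l m => pi' q * _ * _ * _ * _) (fun q l m => pi' q * pi' l * pi' m * (p' q l * F (th' q l) A * f2' q m * f3' l m))) by (intros; ring).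
    exact H.
Qed.
Lemma step2 f1 f1' f3 f3' : nn Q f1 -> nn Q f1' -> nn Q f3 -> nn Q f3' ->
  (forall A, Sig A -> Psi Q pi f1 (pF F p th A) f3 = Psi Q pi' f1' (pF F p' th' A) f3') ->
  forall B, Psi Q pi f1 (pI p th B) f3 = Psi Q pi' f1' (pI p' th' B) f3'.
Proof.
  intros N1 N1' N3 N3' H B. unfold Psi, pI.
  pose proof (mix3 Sig HS F HF HA Q HQ
    (fun q l m => pi q * pi l * pi m * (f1 q l * p q m * f3 l m))
    (fun q l m => pi' q * pi' l * pi' m * (f1' q l * p' q m * f3' l m))
    (fun q l m => th q m) (fun q l m => th' q m) t0) as M.
  rewrite (sum3_ext Q _ (fun q l m => pi q * pi l * pi m * (f1 q l * p q m * f3 l m) * Defs.ind B (th q m))) by (intros; ring).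
  rewrite (sum3_ext Q (fun q l m => pi' q * _ * _ * _) (fun q l m => pi' q * pi' l * pi' m * (f1' q l * p' q m * f3' l m) * Defs.ind B (th' q m))) by (intros; ring).
  apply M.
  - intros q l m Hq Hl Hm. pose proof (Hpi q Hq); pose proof (Hpi l Hl); pose proof (Hpi m Hm).
    pose proof (N1 q l Hq Hl); pose proof (Hp q m Hq Hm); pose proof (N3 l m Hl Hm).
    repeat apply Rmult_le_pos; auto.
  - intros q l m Hq Hl Hm. pose proof (Hpi' q Hq); pose proof (Hpi' l Hl); pose proof (Hpi' m Hm).
    pose proof (N1' q l Hq Hl); pose proof (Hp' q m Hq Hm); pose proof (N3' l m Hl Hm).
    repeat apply Rmult_le_pos; auto.
  - intros A HA0. specialize (H A HA0). unfold Psi, pF in H.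
    rewrite (sum3_ext Q _ (fun q l m => pi q * pi l * pi m * (f1 q l * (p q m * F (th q m) A) * f3 l m))) by (intros; ring).
    rewrite (sum3_ext Q (fun q l m => pi' q * _ * _ * _ * _) (fun q l m => pi' q * pi' l * pi' m * (f1' q l * (p' q m * F (th' q m) A) * f3' l m))) by (intros; ring).
    exact H.
Qed.
Lemma step3 f1 f1' f2 f2' : nn Q f1 -> nn Q f1' -> nn Q f2 -> nn Q f2' ->
  (forall A, Sig A -> Psi Q pi f1 f2 (pF F p th A) = Psi Q pi' f1' f2' (pF F p' th' A)) ->
  forall B, Psi Q pi f1 f2 (pI p th B) = Psi Q pi' f1' f2' (pI p' th' B).
Proof.
  intros N1 N1' N2 N2' H B. unfold Psi, pI.
  pose proof (mix3 Sig HS F HF HA Q HQ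
    (fun q l m => pi q * pi l * pi m * (f1 q l * f2 q m * p l m))
    (fun q l m => pi' q * pi' l * pi' m * (f1' q l * f2' q m * p' l m))
    (fun q l m => th l m) (fun q l m => th' l m) t0) as M.
  rewrite (sum3_ext Q _ (fun q l m => pi q * pi l * pi m * (f1 q l * f2 q m * p l m) * Defs.ind B (th l m))) by (intros; ring).
  rewrite (sum3_ext Q (fun q l m => pi' q * _ * _ * _) (fun q l m => pi' q * pi' l * pi' m * (f1' q l * f2' q m * p' l m) * Defs.ind B (th' l m))) by (intros; ring).
  apply M.
  - intros q l m Hq Hl Hm. pose proof (Hpi q Hq); pose proof (Hpi l Hl); pose proof (Hpi m Hm).
    pose proof (N1 q l Hq Hl); pose proof (N2 q m Hq Hm); pose proof (Hp l m Hl Hm).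
    repeat apply Rmult_le_pos; auto.
  - intros q l m Hq Hl Hm. pose proof (Hpi' q Hq); pose proof (Hpi' l Hl); pose proof (Hpi' m Hm).
    pose proof (N1' q l Hq Hl); pose proof (N2' q m Hq Hm); pose proof (Hp' l m Hl Hm).
    repeat apply Rmult_le_pos; auto.
  - intros A HA0. specialize (H A HA0). unfold Psi, pF in H.
    rewrite (sum3_ext Q _ (fun q l m => pi q * pi l * pi m * (f1 q l * f2 q m * (p l m * F (th l m) A)))) by (intros; ring).
    rewrite (sum3_ext Q (fun q l m => pi' q * _ * _ * _ * _) (fun q l m => pi' q * pi' l * pi' m * (f1' q l * f2' q m * (p' l m * F (th' l m) A)))) by (intros; ring).
    exact H.
Qed.
End Steps.

Lemma ind_eq {T : Type} (v : T) : Defs.ind (fun t => t = v) v = 1.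
Proof. unfold Defs.ind. destruct (excluded_middle_informative (v = v)); tauto. Qed.
Lemma ind_ne0 {T : Type} (v x : T) : Defs.ind (fun t => t = v) x <> 0 -> x = v.
Proof. unfold Defs.ind. destruct (excluded_middle_informative (x = v)); auto. intros H; lra. Qed.
Lemma ind_nonneg {T : Type} (B : T -> Prop) x : 0 <= Defs.ind B x.
Proof. unfold Defs.ind. destruct (excluded_middle_informative (B x)); lra. Qed.

Lemma prod_ne0 a b : a * b <> 0 -> a <> 0 /\ b <> 0.
Proof. intros H; split; intros E; apply H; rewrite E; ring. Qed.

Section Single.
Variables (Theta : Type) (Q : nat) (pi : nat -> R) (p : nat -> nat -> R) (th : nat -> nat -> Theta)
  (Hv : valid_params Q pi p th) (Hd : thetas_distinct Q th).

Lemma pair_eq a b c d : (a < Q)%nat -> (b < Q)%nat -> (c < Q)%nat -> (d < Q)%nat ->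
  th a b = th c d -> (a = c /\ b = d) \/ (a = d /\ b = c).
Proof. intros Ha Hb Hc Hd' E. destruct Hv as [_ [_ Hs]].
  destruct (le_lt_dec a b), (le_lt_dec c d).
  - left; apply Hd; auto.
  - right. destruct (Hs c d Hc Hd') as [_ [_ E2]]. rewrite E2 in E. destruct (Hd a b d c) as [? ?]; auto; lia.
  - destruct (Hs a b Ha Hb) as [_ [_ E2]]. rewrite E2 in E. right. destruct (Hd b a c d) as [? ?]; auto; lia.
  - destruct (Hs a b Ha Hb) as [_ [_ E2]]. rewrite E2 in E.
    destruct (Hs c d Hc Hd') as [_ [_ E3]]. rewrite E3 in E. left. destruct (Hd b a d c) as [? ?]; auto; lia.
Qed.

Lemma single_diag a f3 : (a < Q)%nat ->
  Psi Q pi (pI p th (fun t => t = th a a)) (pI p th (fun t => t = th a a)) f3 = pi a * pi a * pi a * (p a a * p a a * f3 a a).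
Proof. intros Ha. unfold Psi. rewrite (sum3_single Q _ a a a); auto.
  - unfold pI. rewrite ind_eq. ring.
  - intros q l m Hq Hl Hm H. apply prod_ne0 in H as [_ H]. apply prod_ne0 in H as [H _].
    apply prod_ne0 in H as [H1 H2]. unfold pI in H1, H2.
    apply prod_ne0 in H1 as [_ H1]. apply prod_ne0 in H2 as [_ H2].
    apply ind_ne0 in H1. apply ind_ne0 in H2.
    destruct (pair_eq q l a a) as [[? ?]|[? ?]]; auto; subst;
    destruct (pair_eq a m a a) as [[? ?]|[? ?]]; auto; subst; repeat split; lia.
Qed.

Lemma single_off a b f3 : (a < Q)%nat -> (b < Q)%nat -> a <> b ->
  Psi Q pi (pI p th (fun t => t = th a a)) (pI p th (fun t => t = th a b)) f3 = pi a * pi a * pi b * (p a a * p a b * f3 a b).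
Proof. intros Ha Hb Nab. unfold Psi. rewrite (sum3_single Q _ a a b); auto.
  - unfold pI. rewrite !ind_eq. ring.
  - intros q l m Hq Hl Hm H. apply prod_ne0 in H as [_ H]. apply prod_ne0 in H as [H _].
    apply prod_ne0 in H as [H1 H2]. unfold pI in H1, H2.
    apply prod_ne0 in H1 as [_ H1]. apply prod_ne0 in H2 as [_ H2].
    apply ind_ne0 in H1. apply ind_ne0 in H2.
    destruct (pair_eq q l a a) as [[? ?]|[? ?]]; auto; subst;
    destruct (pair_eq a m a b) as [[? ?]|[? ?]]; auto; subst; repeat split; lia.
Qed.

Lemma exists_term v1 v2 v3 :
  Psi Q pi (pI p th (fun t => t = v1)) (pI p th (fun t => t = v2)) (pI p th (fun t => t = v3)) <> 0 ->
  exists q l m, (q < Q)%nat /\ (l < Q)%nat /\ (m < Q)%nat /\ th q l = v1 /\ th q m = v2 /\ th l m = v3.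
Proof. intros H. unfold Psi in H. apply sum3_zero_ex in H as [q [l [m [Hq [Hl [Hm H]]]]]].
  exists q, l, m. repeat split; auto.
  - apply prod_ne0 in H as [_ H]. apply prod_ne0 in H as [H _]. apply prod_ne0 in H as [H _].
    unfold pI in H. apply prod_ne0 in H as [_ H]. apply ind_ne0; auto.
  - apply prod_ne0 in H as [_ H]. apply prod_ne0 in H as [H _]. apply prod_ne0 in H as [_ H].
    unfold pI in H. apply prod_ne0 in H as [_ H]. apply ind_ne0; auto.
  - apply prod_ne0 in H as [_ H]. apply prod_ne0 in H as [_ H].
    unfold pI in H. apply prod_ne0 in H as [_ H]. apply ind_ne0; auto.
Qed.
End Single.

Lemma cube_inj x y : 0 < x -> 0 < y -> x * x * x = y * y * y -> x = y.
Proof. intros Hx Hy E. destruct (Rtotal_order x y) as [L|[L|L]]; auto; exfalso.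
  - assert (x * x < y * y) by nra. nra.
  - assert (y * y < x * x) by nra. nra. Qed.
Lemma sq_inj x y : 0 < x -> 0 < y -> x * x = y * y -> x = y.
Proof. intros Hx Hy E. destruct (Rtotal_order x y) as [L|[L|L]]; auto; exfalso; nra. Qed.
Theorem theorem5
  (X : Type) (S : (X -> Prop) -> Prop) (x0 : X)
  (Theta : Type) (F : Theta -> (X -> Prop) -> R)
  (HS : is_sigma_algebra S) (H0 : S (fun x => x = x0))
  (HF : forall t, is_prob_measure S (F t))
  (HA2i : forall t, F t (fun x => x = x0) = 0)
  (HA2ii : mixtures_identifiable S F)
  (Q : nat) (HQ : (2 <= Q)%nat)
  (pi pi' : nat -> R) (p p' : nat -> nat -> R) (th th' : nat -> nat -> Theta)
  (Hv : valid_params Q pi p th) (Hv' : valid_params Q pi' p' th')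
  (HA1 : thetas_distinct Q th) (HA1' : thetas_distinct Q th')
  (Hlaw : forall A1 A2 A3, S A1 -> S A2 -> S A3 ->
     K3_law x0 F Q pi p th A1 A2 A3 = K3_law x0 F Q pi' p' th' A1 A2 A3) :
  exists sigma : nat -> nat, is_perm Q sigma /\
    (forall q, (q < Q)%nat -> pi' q = pi (sigma q)) /\
    (forall q l, (q < Q)%nat -> (l < Q)%nat ->
       p' q l = p (sigma q) (sigma l) /\ th' q l = th (sigma q) (sigma l)).
Proof.
  assert (HQ0 : (0 < Q)%nat) by lia.
  assert (Hpi0 : forall pi0 p0 (th0 : nat -> nat -> Theta), valid_params Q pi0 p0 th0 -> forall q, (q < Q)%nat -> 0 <= pi0 q).
  { intros pi0 p0 th0 [H _] q Hq. specialize (H q Hq). lra. }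
  assert (Hp0 : forall pi0 p0 (th0 : nat -> nat -> Theta), valid_params Q pi0 p0 th0 -> nn Q p0).
  { intros pi0 p0 th0 [_ [_ H]] q l Hq Hl. specialize (H q l Hq Hl). lra. }
  assert (nnpF : forall pi0 p0 th0 A, valid_params Q pi0 p0 th0 -> S A -> nn Q (pF F p0 th0 A)).
  { intros pi0 p0 th0 A V HA q l Hq Hl. unfold pF. apply Rmult_le_pos. apply (Hp0 _ _ _ V); auto.
    apply (m_nonneg S (F _) (HF _)); auto. }
  assert (nnpI : forall pi0 p0 (th0 : nat -> nat -> Theta) B, valid_params Q pi0 p0 th0 -> nn Q (pI p0 th0 B)).
  { intros pi0 p0 th0 B V q l Hq Hl. unfold pI. apply Rmult_le_pos. apply (Hp0 _ _ _ V); auto. apply ind_nonneg. }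
  assert (nnmu : forall pi0 p0 th0 A, valid_params Q pi0 p0 th0 -> S A -> nn Q (fun q l => mu x0 F p0 th0 q l A)).
  { intros pi0 p0 th0 A [_ [_ V]] HA q l Hq Hl. unfold mu. destruct (V q l Hq Hl) as [[P1 P2] _].
    pose proof (m_nonneg S (F (th0 q l)) (HF _) A HA). unfold dirac. pose proof (ind_nonneg A x0). nra. }
  assert (Snz : forall A, S A -> S (fun x => A x /\ x <> x0)).
  { intros A HA. apply (S_inter S HS); auto. apply (S_compl S HS). auto. }
  assert (munz : forall (p0 : nat -> nat -> R) th0 A, S A -> (fun q l => mu x0 F p0 th0 q l (fun x => A x /\ x <> x0)) = pF F p0 th0 A).
  { intros p0 th0 A HA. apply functional_extensionality; intro q; apply functional_extensionality; intro l.
    unfold mu, pF, dirac, Defs.ind. destruct (excluded_middle_informative (A x0 /\ x0 <> x0)) as [[_ C]|_]; [now exfalso|].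
    rewrite (m_restrict S HS (F (th0 q l)) (HF _) A x0 HA H0 (HA2i _)). ring. }
  assert (mutrue : forall (p0 : nat -> nat -> R) th0, (fun q l => mu x0 F p0 th0 q l (fun _ => True)) = fun _ _ => 1).
  { intros p0 th0. apply functional_extensionality; intro q; apply functional_extensionality; intro l.
    unfold mu, dirac, Defs.ind. destruct (excluded_middle_informative True) as [_|C]; [|tauto].
    rewrite (m_true S (F _) (HF _)). ring. }
  assert (pFtrue : forall (p0 : nat -> nat -> R) th0, pF F p0 th0 (fun _ => True) = p0).
  { intros p0 th0. apply functional_extensionality; intro q; apply functional_extensionality; intro l.
    unfold pF. rewrite (m_true S (F _) (HF _)). ring. }
  assert (Strue : S (fun _ => True)) by (destruct HS; auto).
  set (t0 := th 0%nat 0%nat).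
  pose proof (Hpi0 _ _ _ Hv) as Pi0. pose proof (Hpi0 _ _ _ Hv') as Pi0'.
  pose proof (Hp0 _ _ _ Hv) as P0. pose proof (Hp0 _ _ _ Hv') as P0'.
  assert (E0 : forall A1 A2 A3, S A1 -> S A2 -> S A3 ->
    Psi Q pi (pF F p th A1) (fun q l => mu x0 F p th q l A2) (fun q l => mu x0 F p th q l A3) =
    Psi Q pi' (pF F p' th' A1) (fun q l => mu x0 F p' th' q l A2) (fun q l => mu x0 F p' th' q l A3)).
  { intros A1 A2 A3 H1 H2 H3. rewrite <- !munz by auto. exact (Hlaw _ A2 A3 (Snz _ H1) H2 H3). }
  assert (E1 : forall B1 A2 A3, S A2 -> S A3 ->
    Psi Q pi (pI p th B1) (fun q l => mu x0 F p th q l A2) (fun q l => mu x0 F p th q l A3) =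
    Psi Q pi' (pI p' th' B1) (fun q l => mu x0 F p' th' q l A2) (fun q l => mu x0 F p' th' q l A3)).
  { intros B1 A2 A3 H2 H3. apply (step1 X Theta S HS F HF HA2ii Q HQ0 t0 pi pi' p p' th th' Pi0 Pi0' P0 P0');
      try (eapply nnmu; eauto). intros A HA. apply E0; auto. }
  assert (E2 : forall B1 B2 A3, S A3 ->
    Psi Q pi (pI p th B1) (pI p th B2) (fun q l => mu x0 F p th q l A3) =
    Psi Q pi' (pI p' th' B1) (pI p' th' B2) (fun q l => mu x0 F p' th' q l A3)).
  { intros B1 B2 A3 H3. apply (step2 X Theta S HS F HF HA2ii Q HQ0 t0 pi pi' p p' th th' Pi0 Pi0' P0 P0');
      try (eapply nnmu; eauto); try (eapply nnpI; eauto).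
    intros A HA. rewrite <- !munz by auto. apply E1; auto. }
  assert (E3 : forall B1 B2 B3,
    Psi Q pi (pI p th B1) (pI p th B2) (pI p th B3) =
    Psi Q pi' (pI p' th' B1) (pI p' th' B2) (pI p' th' B3)).
  { intros B1 B2 B3. apply (step3 X Theta S HS F HF HA2ii Q HQ0 t0 pi pi' p p' th th' Pi0 Pi0' P0 P0');
      try (eapply nnpI; eauto).
    intros A HA. rewrite <- !munz by auto. apply E2; auto. }
  assert (E2t : forall B1 B2,
    Psi Q pi (pI p th B1) (pI p th B2) (fun _ _ => 1) =
    Psi Q pi' (pI p' th' B1) (pI p' th' B2) (fun _ _ => 1)).
  { intros B1 B2. pose proof (E2 B1 B2 _ Strue) as E. rewrite !mutrue in E. exact E. }
  assert (E2p : forall B1 B2,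
    Psi Q pi (pI p th B1) (pI p th B2) p =
    Psi Q pi' (pI p' th' B1) (pI p' th' B2) p').
  { intros B1 B2. pose proof (E2 B1 B2 _ (Snz _ Strue)) as E. rewrite !munz, !pFtrue in E by auto. exact E. }
  assert (Pos3 : forall a b c d e f, 0 < a -> 0 < b -> 0 < c -> 0 < d -> 0 < e -> 0 < f -> 0 < a * b * c * (d * e * f)).
  { intros. repeat apply Rmult_lt_0_compat; auto. }
  assert (Ppi : forall pi0 p0 (th0 : nat -> nat -> Theta), valid_params Q pi0 p0 th0 -> forall q, (q < Q)%nat -> 0 < pi0 q).
  { intros pi0 p0 th0 [H _] q Hq. apply H; auto. }
  assert (Pp : forall pi0 p0 (th0 : nat -> nat -> Theta), valid_params Q pi0 p0 th0 -> forall q l, (q < Q)%nat -> (l < Q)%nat -> 0 < p0 q l).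
  { intros pi0 p0 th0 [_ [_ H]] q l Hq Hl. apply H; auto. }
  assert (Dex : forall q, (q < Q)%nat -> exists a, (a < Q)%nat /\ th a a = th' q q).
  { intros q Hq.
    pose proof (E3 (fun t => t = th' q q) (fun t => t = th' q q) (fun t => t = th' q q)) as E.
    rewrite (single_diag Theta Q pi' p' th' Hv' HA1' q) in E by auto.
    unfold pI at 4 in E. rewrite ind_eq, Rmult_1_r in E.
    assert (Pos : 0 < pi' q * pi' q * pi' q * (p' q q * p' q q * p' q q)).
    { apply Pos3; eauto. }
    destruct (exists_term Theta Q pi p th _ _ _ ltac:(rewrite E; lra)) as [a [l [m [Ha [Hl [Hm [T1 [T2 T3]]]]]]]].
    assert (lm : l = m).
    { rewrite <- T2 in T1. destruct (pair_eq Theta Q pi p th Hv HA1 a l a m) as [[? ?]|[? ?]]; auto; lia. }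
    subst m. rewrite <- T3 in T1.
    destruct (pair_eq Theta Q pi p th Hv HA1 a l l l) as [[? ?]|[? ?]]; auto; subst; exists l; auto. }
  set (sigma := fun q => epsilon (inhabits 0%nat) (fun a => (a < Q)%nat /\ th a a = th' q q)).
  assert (Hsig : forall q, (q < Q)%nat -> (sigma q < Q)%nat /\ th (sigma q) (sigma q) = th' q q).
  { intros q Hq. apply (epsilon_spec (inhabits 0%nat) (fun a => (a < Q)%nat /\ th a a = th' q q)). auto. }
  assert (Hinj : forall q q', (q < Q)%nat -> (q' < Q)%nat -> sigma q = sigma q' -> q = q').
  { intros q q' Hq Hq' E. destruct (Hsig q Hq) as [_ G1]. destruct (Hsig q' Hq') as [_ G2].
    rewrite E in G1. rewrite G1 in G2. destruct (HA1' q' q' q q) as [? ?]; auto. }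
  assert (Hhalf : forall q l, (q < Q)%nat -> (l < Q)%nat -> q <> l -> exists m, (m < Q)%nat /\ th (sigma q) m = th' q l).
  { intros q l Hq Hl Nql.
    pose proof (E3 (fun t => t = th' q q) (fun t => t = th' q l) (fun t => t = th' q l)) as E.
    rewrite (single_off Theta Q pi' p' th' Hv' HA1' q l) in E by auto.
    unfold pI at 4 in E. rewrite ind_eq, Rmult_1_r in E.
    assert (Pos : 0 < pi' q * pi' q * pi' l * (p' q q * p' q l * p' q l)).
    { apply Pos3; eauto. }
    destruct (exists_term Theta Q pi p th _ _ _ ltac:(rewrite E; lra)) as [a [b [m [Ha [Hb [Hm [T1 [T2 T3]]]]]]]].
    destruct (Hsig q Hq) as [Hs1 Hs2]. rewrite <- Hs2 in T1.
    exists m; split; auto.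
    destruct (pair_eq Theta Q pi p th Hv HA1 a b (sigma q) (sigma q)) as [[? ?]|[? ?]]; auto; subst; auto. }
  assert (Hall : forall q l, (q < Q)%nat -> (l < Q)%nat -> th' q l = th (sigma q) (sigma l)).
  { intros q l Hq Hl. destruct (Nat.eq_dec q l) as [<-|Nql].
    - symmetry; apply Hsig; auto.
    - destruct (Hhalf q l Hq Hl Nql) as [m1 [Hm1 T1]].
      destruct (Hhalf l q Hl Hq (not_eq_sym Nql)) as [m2 [Hm2 T2]].
      destruct Hv' as [_ [_ Hs']]. destruct (Hs' l q Hl Hq) as [_ [_ Sy]]. rewrite Sy, <- T1 in T2.
      destruct (Hsig q Hq) as [Sq _]. destruct (Hsig l Hl) as [Sl _].
      destruct (pair_eq Theta Q pi p th Hv HA1 (sigma l) m2 (sigma q) m1) as [[? ?]|[? ?]]; auto.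
      + exfalso; apply Nql; apply Hinj; auto.
      + subst. auto. }
  assert (Hdiag : forall q, (q < Q)%nat -> pi' q = pi (sigma q) /\ p' q q = p (sigma q) (sigma q)).
  { intros q Hq. destruct (Hsig q Hq) as [Sq Hs2]. set (a := sigma q) in *.
    pose proof (E3 (fun t => t = th' q q) (fun t => t = th' q q) (fun t => t = th' q q)) as EY.
    pose proof (E2t (fun t => t = th' q q) (fun t => t = th' q q)) as EZ.
    rewrite (single_diag Theta Q pi' p' th' Hv' HA1' q) in EY, EZ by auto.
    rewrite <- Hs2 in EY, EZ.
    rewrite (single_diag Theta Q pi p th Hv HA1 a) in EY, EZ by auto.
    unfold pI in EY. rewrite <- ?Hs2 in EY. rewrite !ind_eq in EY.
    pose proof (Ppi _ _ _ Hv a Sq). pose proof (Ppi _ _ _ Hv' q Hq).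
    pose proof (Pp _ _ _ Hv a a Sq Sq). pose proof (Pp _ _ _ Hv' q q Hq Hq).
    assert (Epp : p a a = p' q q).
    { assert (EY2 : (pi a * pi a * pi a * (p a a * p a a * 1)) * p a a = (pi' q * pi' q * pi' q * (p' q q * p' q q * 1)) * p' q q) by lra.
      rewrite EZ in EY2. apply Rmult_eq_reg_l in EY2; auto. apply Rgt_not_eq. apply Pos3; lra. }
    rewrite Epp in EZ. split; auto.
    symmetry. apply cube_inj; auto.
    assert (0 < p' q q * p' q q * 1) by nra.
    apply Rmult_eq_reg_r with (p' q q * p' q q * 1); lra. }
  exists sigma. split; [split; [intros; apply Hsig; auto | exact Hinj]|]. split.
  { intros q Hq; apply Hdiag; auto. }
  intros q l Hq Hl. split; [|apply Hall; auto].
  destruct (Nat.eq_dec q l) as [<-|Nql]; [apply Hdiag; auto|].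
  destruct (Hsig q Hq) as [Sq _]. destruct (Hsig l Hl) as [Sl _].
  assert (Nab : sigma q <> sigma l) by (intro C; apply Nql; apply Hinj; auto).
  pose proof (E2p (fun t => t = th' q q) (fun t => t = th' q l)) as EU.
  rewrite (single_off Theta Q pi' p' th' Hv' HA1' q l) in EU by auto.
  rewrite (Hall q q Hq Hq), (Hall q l Hq Hl) in EU.
  rewrite (single_off Theta Q pi p th Hv HA1 (sigma q) (sigma l)) in EU by auto.
  destruct (Hdiag q Hq) as [D1 D2]. destruct (Hdiag l Hl) as [D3 _].
  rewrite <- D1, <- D2, <- D3 in EU.
  pose proof (Ppi _ _ _ Hv' q Hq). pose proof (Ppi _ _ _ Hv' l Hl). pose proof (Pp _ _ _ Hv' q q Hq Hq).
  pose proof (Pp _ _ _ Hv' q l Hq Hl). pose proof (Pp _ _ _ Hv (sigma q) (sigma l) Sq Sl).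
  symmetry. apply sq_inj; auto.
  assert (K : 0 < pi' q * pi' q * pi' l * p' q q) by (repeat apply Rmult_lt_0_compat; auto).
  apply Rmult_eq_reg_l with (pi' q * pi' q * pi' l * p' q q); [|lra].
  transitivity (pi' q * pi' q * pi' l * (p' q q * p (sigma q) (sigma l) * p (sigma q) (sigma l))); [ring|].
  rewrite EU. ring.
Qed.
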